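(* Let $n\ge 2$ be an integer, let $a_1,\dots,a_n>0$ with $\sum_{k=1}^n a_k=1$, and let $c_k,d_k,\beta_k\in\mathbb{R}$ ($k=1,\dots,n$) with $\max_{1\le k\le n}|d_k|<1$. Put $\alpha_1=0$, $\alpha_k=\sum_{j=1}^{k-1}a_j$ for $k=2,\dots,n+1$, and $S_k(x)=a_kx+\alpha_k$. Let $f\in C[0;1]$ be a continuous function satisfying $f=G(f)$, where $$[G(f)](t)=\sum_{k=1}^n\bigl(d_k f(S_k^{-1}(t))+c_k t+\beta_k\bigr)\chi_{I_k}(t),\qquad I_1=[0;\alpha_2],\ I_k=(\alpha_k;\alpha_{k+1}]\ (k\ge2).$$ Suppose $|d_i|<a_i$ for all $i=1,\dots,n$. Then $f$ satisfies the Hölder condition for every exponent $\alpha\in(0;1]$; in particular $f$ is Lipschitz: there is $C\ge0$ with $|f(x)-f(y)|\le C|x-y|$ for all $x,y\in[0;1]$.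
   Context: Here $\chi_I$ is the indicator function of the interval $I$. A continuous function $f$ with $G(f)=f$ is called an (affine) self-similar function with self-similarity parameters $\{a_k\},\{c_k\},\{d_k\},\{\beta_k\}$. A function $f$ on $[0;1]$ satisfies the Hölder condition with exponent $\alpha\in(0;1]$ if $\sup_{x\ne y}|f(x)-f(y)|/|x-y|^\alpha<\infty$. *)

(* Defs.v *)
(* concrete reals R. Indices k range over 1..n. *)
From Stdlib Require Import Reals Lra Lia.
Open Scope R_scope.

Fixpoint psum (a : nat -> R) (m : nat) : R :=
  match m with
  | O => 0
  | S m' => psum a m' + a (S m')
  end.

Definition alpha (a : nat -> R) (k : nat) : R := psum a (k - 1).

Definition Sinv (a : nat -> R) (k : nat) (t : R) : R := (t - alpha a k) / a k.

Definition chiI (a : nat -> R) (k : nat) (t : R) : R :=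
  if Nat.eqb k 1 then
    (if Rle_dec 0 t then (if Rle_dec t (alpha a 2) then 1 else 0) else 0)
  else
    (if Rlt_dec (alpha a k) t then (if Rle_dec t (alpha a (S k)) then 1 else 0) else 0).

Fixpoint sum1 (F : nat -> R) (m : nat) : R :=
  match m with
  | O => 0
  | S m' => sum1 F m' + F (S m')
  end.

Definition G (n : nat) (a c d beta : nat -> R) (f : R -> R) (t : R) : R :=
  sum1 (fun k => (d k * f (Sinv a k t) + c k * t + beta k) * chiI a k t) n.

Definition continuous_on01 (f : R -> R) : Prop :=
  forall x, 0 <= x <= 1 -> forall eps, 0 < eps ->
    exists delta, 0 < delta /\
      forall y, 0 <= y <= 1 -> Rabs (y - x) < delta -> Rabs (f y - f x) < eps.

Definition holder01 (f : R -> R) (al : R) : Prop :=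
  exists C, forall x y, 0 <= x <= 1 -> 0 <= y <= 1 -> x <> y ->
    Rabs (f x - f y) <= C * Rpower (Rabs (x - y)) al.

(* Main.v *)
Require Import Defs.
From Stdlib Require Import Reals.
From Stdlib Require Import Lra Lia.
Open Scope R_scope.

Fixpoint mx (g : nat -> R) (m : nat) : R :=
  match m with O => 0 | S m' => Rmax (mx g m') (g (S m')) end.

Lemma mx_ge0 g m : 0 <= mx g m.
Proof. induction m; simpl; [lra|]. apply Rle_trans with (mx g m); auto; apply Rmax_l. Qed.

Lemma mx_ub g m k : (1 <= k <= m)%nat -> g k <= mx g m.
Proof.
  induction m; intros; [lia|]. simpl. destruct (Nat.eq_dec k (S m)).
  - subst; apply Rmax_r.
  - apply Rle_trans with (mx g m); [apply IHm; lia| apply Rmax_l].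
Qed.

Lemma mx_lt g m c : 0 < c -> (forall k, (1 <= k <= m)%nat -> g k < c) -> mx g m < c.
Proof.
  induction m; simpl; intros; [lra|].
  apply Rmax_lub_lt; [apply IHm; auto; intros; apply H0; lia | apply H0; lia].
Qed.

Lemma psum_mono a n : (forall k, (1 <= k <= n)%nat -> 0 < a k) ->
  forall p q, (p <= q <= n)%nat -> psum a p <= psum a q.
Proof.
  intros Ha p q. induction q; intros.
  - assert (p = 0)%nat by lia; subst; lra.
  - destruct (Nat.eq_dec p (S q)). subst; lra. simpl.
    assert (psum a p <= psum a q) by (apply IHq; lia).
    assert (0 < a (S q)) by (apply Ha; lia). lra.
Qed.

Lemma sum1_single F k m : (1 <= k)%nat ->
  (forall j, (1 <= j <= m)%nat -> j <> k -> F j = 0) ->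
  sum1 F m = if Nat.leb k m then F k else 0.
Proof.
  induction m; intros Hk HF; simpl.
  - destruct (Nat.leb_spec k 0); [lia|reflexivity].
  - rewrite IHm; auto; [| intros; apply HF; lia].
    destruct (Nat.eq_dec (S m) k).
    + subst. destruct (Nat.leb_spec (S m) m); [lia|].
      destruct (Nat.leb_spec (S m) (S m)); [lra|lia].
    + rewrite (HF (S m)); [|lia|auto].
      destruct (Nat.leb_spec k m); destruct (Nat.leb_spec k (S m)); try lia; lra.
Qed.

Lemma limit_geom X Y r c : 0 <= r < 1 -> 0 <= c -> (forall m, X <= Y + r^m * c) -> X <= Y.
Proof.
  intros Hr Hc H. destruct (Rle_dec X Y); auto. exfalso.
  destruct (Req_dec c 0).
  - subst. specialize (H 0%nat). simpl in H. lra.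
  - assert (Habs : Rabs r < 1) by (rewrite Rabs_pos_eq; lra).
    assert (Hpos : 0 < (X - Y) / c) by (apply Rdiv_lt_0_compat; lra).
    destruct (pow_lt_1_zero r Habs ((X-Y)/c) Hpos) as [N HN].
    specialize (HN N (le_n N)). rewrite Rabs_pos_eq in HN by (apply pow_le; lra).
    specialize (H N).
    assert (r^N * c < (X-Y)/c * c) by (apply Rmult_lt_compat_r; lra).
    replace ((X-Y)/c*c) with (X-Y) in H1 by (field; lra). lra.
Qed.

Lemma rpow_ge r al : 0 < r <= 1 -> 0 < al <= 1 -> r <= Rpower r al.
Proof.
  unfold Rpower. intros. apply Rle_trans with (exp (ln r)); [rewrite exp_ln; lra|].
  assert (ln r <= 0).
  { destruct (Req_dec r 1). subst; rewrite ln_1; lra. rewrite <- ln_1. left; apply ln_increasing; lra. }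
  assert (0 <= (1-al) * (- ln r)) by (apply Rmult_le_pos; lra).
  assert (ln r <= al * ln r) by lra.
  destruct H3 as [H3|H3]; [left; apply exp_increasing; auto| right; f_equal; auto].
Qed.

Lemma Rabs_bnd x y : Rabs x <= y -> -y <= x <= y.
Proof. unfold Rabs; destruct Rcase_abs; lra. Qed.

Theorem theorem5 (n : nat) (a c d beta : nat -> R) (f : R -> R) :
  (2 <= n)%nat ->
  (forall k, (1 <= k <= n)%nat -> 0 < a k) ->
  psum a n = 1 ->
  (forall k, (1 <= k <= n)%nat -> Rabs (d k) < 1) ->
  continuous_on01 f ->
  (forall t, 0 <= t <= 1 -> f t = G n a c d beta f t) ->
  (forall i, (1 <= i <= n)%nat -> Rabs (d i) < a i) ->
  (forall al, 0 < al <= 1 -> holder01 f al) /\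
  (exists C, 0 <= C /\ forall x y, 0 <= x <= 1 -> 0 <= y <= 1 ->
     Rabs (f x - f y) <= C * Rabs (x - y)).
Proof.
  intros Hn Ha Hsum Hd1 Hcont Hfix Hda.
  assert (A1 : alpha a 1 = 0) by reflexivity.
  assert (AS : forall k, (1 <= k)%nat -> alpha a (S k) = alpha a k + a k).
  { intros k Hk. destruct k; [lia|]. unfold alpha. simpl. rewrite Nat.sub_0_r. reflexivity. }
  assert (Amono : forall p q, (1 <= p <= q)%nat -> (q <= S n)%nat -> alpha a p <= alpha a q).
  { unfold alpha; intros; apply (psum_mono a n Ha); lia. }
  assert (Anp1 : alpha a (S n) = 1).
  { unfold alpha. simpl. rewrite Nat.sub_0_r. auto. }
  assert (Arange : forall k, (1 <= k <= S n)%nat -> 0 <= alpha a k <= 1).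
  { intros; split; [rewrite <- A1 | rewrite <- Anp1]; apply Amono; lia. }
  assert (Hpiece : forall k t, (1 <= k <= n)%nat ->
     ((k = 1%nat /\ 0 <= t <= alpha a 2) \/ ((2 <= k)%nat /\ alpha a k < t <= alpha a (S k))) ->
     f t = d k * f (Sinv a k t) + c k * t + beta k).
  { intros k t Hk Ht.
    assert (Ht01 : 0 <= t <= 1).
    { destruct Ht as [[-> Hq]|[Hq1 Hq2]].
      - pose proof (Arange 2%nat ltac:(lia)); lra.
      - pose proof (Arange k ltac:(lia)); pose proof (Arange (S k) ltac:(lia)); lra. }
    rewrite (Hfix t Ht01). unfold G. rewrite (sum1_single _ k n); [| lia | ].
    - destruct (Nat.leb_spec k n); [|lia]. unfold chiI.
      destruct Ht as [[-> Hq]|[Hq1 Hq2]]; simpl Nat.eqb; cbv iota;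
      [| destruct (Nat.eqb_spec k 1); [lia|]];
      repeat destruct Rle_dec; repeat destruct Rlt_dec; first [ring | exfalso; lra].
    - intros j Hj Hjk. unfold chiI.
      destruct (Nat.lt_ge_cases j k).
      + assert (alpha a (S j) <= alpha a k) by (apply Amono; lia).
        destruct Ht as [[-> Hq]|[Hq1 Hq2]]; [lia|].
        destruct (Nat.eqb_spec j 1); [subst j|];
        repeat destruct Rle_dec; repeat destruct Rlt_dec; first [ring | exfalso; lra].
      + assert (alpha a (S k) <= alpha a j) by (apply Amono; lia).
        destruct (Nat.eqb_spec j 1); [lia|].
        destruct Ht as [[-> Hq]|[Hq1 Hq2]];
        repeat destruct Rle_dec; repeat destruct Rlt_dec; first [ring | exfalso; lra]. }
  assert (Sinv0 : forall k, Sinv a k (alpha a k) = 0).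
  { intros; unfold Sinv; unfold Rdiv; rewrite Rminus_diag_eq, Rmult_0_l; auto. }
  assert (Sinv1 : forall k, (1 <= k <= n)%nat -> Sinv a k (alpha a (S k)) = 1).
  { intros k Hk; unfold Sinv; rewrite AS by lia. pose proof (Ha k Hk). field; lra. }
  assert (Hclosed : forall k t, (1 <= k <= n)%nat -> alpha a k <= t <= alpha a (S k) ->
     f t = d k * f (Sinv a k t) + c k * t + beta k).
  { intros k t Hk Ht.
    destruct (Nat.eq_dec k 1).
    { subst. apply Hpiece; [lia|left; split; auto; lra]. }
    destruct Ht as [[Hlt|Heq] Hle].
    { apply Hpiece; [lia| right; split; [lia| lra]]. }
    subst t. rewrite Sinv0.
    pose proof (Ha k Hk) as Hak.
    pose proof (Arange k ltac:(lia)) as HAk.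
    pose proof (Arange (S k) ltac:(lia)) as HASk.
    rewrite AS in HASk by lia.
    set (X := f (alpha a k)). set (Y := d k * f 0 + c k * alpha a k + beta k).
    assert (HXY : forall e, 0 < e -> Rabs (X - Y) < e).
    { intros e He.
      destruct (Hcont (alpha a k) HAk (e/3) ltac:(lra)) as [d1 [Hdd1 Hc1]].
      set (e2 := e / (3 * (Rabs (d k) + 1))).
      assert (He2 : 0 < e2) by (unfold e2; apply Rdiv_lt_0_compat; [lra| pose proof (Rabs_pos (d k)); lra]).
      assert (He2' : (Rabs (d k) + 1) * e2 = e / 3) by (unfold e2; field; pose proof (Rabs_pos (d k)); lra).
      destruct (Hcont 0 ltac:(lra) e2 He2) as [d2 [Hdd2 Hc2]].
      set (e3 := e / (3 * (Rabs (c k) + 1))).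
      assert (He3 : 0 < e3) by (unfold e3; apply Rdiv_lt_0_compat; [lra| pose proof (Rabs_pos (c k)); lra]).
      assert (He3' : (Rabs (c k) + 1) * e3 = e / 3) by (unfold e3; field; pose proof (Rabs_pos (c k)); lra).
      assert (Hd2a : 0 < d2 * a k) by (apply Rmult_lt_0_compat; lra).
      set (h := Rmin (Rmin d1 (d2 * a k)) (Rmin (a k) e3) / 2).
      assert (Hh0 : 0 < h).
      { unfold h. assert (0 < Rmin (Rmin d1 (d2 * a k)) (Rmin (a k) e3)); [|lra].
        repeat apply Rmin_glb_lt; lra. }
      assert (Hh1 : h < d1 /\ h < d2 * a k /\ h < a k /\ h < e3).
      { unfold h. pose proof (Rmin_l (Rmin d1 (d2 * a k)) (Rmin (a k) e3)).
        pose proof (Rmin_r (Rmin d1 (d2 * a k)) (Rmin (a k) e3)).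
        pose proof (Rmin_l d1 (d2 * a k)). pose proof (Rmin_r d1 (d2 * a k)).
        pose proof (Rmin_l (a k) e3). pose proof (Rmin_r (a k) e3). lra. }
      destruct Hh1 as [Hh1 [Hh2 [Hh3 Hh4]]].
      assert (Ht : f (alpha a k + h) = d k * f (h / a k) + c k * (alpha a k + h) + beta k).
      { rewrite (Hpiece k (alpha a k + h)); [| lia | right; split; [lia|rewrite AS by lia; lra]].
        unfold Sinv. replace (alpha a k + h - alpha a k) with h by ring. reflexivity. }
      assert (Hha : 0 <= h / a k <= 1 /\ h / a k < d2).
      { split; [split|].
        - unfold Rdiv; apply Rmult_le_pos; [lra| left; apply Rinv_0_lt_compat; lra].
        - apply (Rmult_le_reg_r (a k)); [lra|]. unfold Rdiv; rewrite Rmult_assoc, Rinv_l, Rmult_1_r; lra.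
        - apply (Rmult_lt_reg_r (a k)); [lra|]. unfold Rdiv; rewrite Rmult_assoc, Rinv_l, Rmult_1_r; lra. }
      destruct Hha as [Hha1 Hha2].
      assert (Hb1 : Rabs (f (alpha a k + h) - f (alpha a k)) < e/3).
      { apply Hc1; [lra|]. replace (alpha a k + h - alpha a k) with h by ring. rewrite Rabs_pos_eq; lra. }
      assert (Hb2 : Rabs (f (h / a k) - f 0) < e2).
      { apply Hc2; [lra|]. rewrite Rminus_0_r, Rabs_pos_eq; lra. }
      assert (Hb3 : Rabs (d k * (f (h / a k) - f 0)) <= e / 3).
      { rewrite Rabs_mult. pose proof (Rabs_pos (d k)). pose proof (Rabs_pos (f (h / a k) - f 0)).
        assert (Rabs (d k) * Rabs (f (h / a k) - f 0) <= Rabs (d k) * e2) by (apply Rmult_le_compat_l; lra).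
        nra. }
      assert (Hb4 : Rabs (c k * h) <= e / 3).
      { rewrite Rabs_mult, (Rabs_pos_eq h) by lra. pose proof (Rabs_pos (c k)).
        assert (Rabs (c k) * h <= Rabs (c k) * e3) by (apply Rmult_le_compat_l; lra).
        nra. }
      replace (X - Y) with (- (f (alpha a k + h) - f (alpha a k)) + d k * (f (h / a k) - f 0) + c k * h)
        by (unfold X, Y; rewrite Ht; ring).
      apply Rabs_def2 in Hb1. apply Rabs_bnd in Hb3. apply Rabs_bnd in Hb4.
      apply Rabs_def1; lra. }
    destruct (Req_dec X Y) as [E|E]; auto. exfalso.
    specialize (HXY (Rabs (X - Y)) (Rabs_pos_lt _ ltac:(intro Hz; apply E; apply Rminus_diag_uniq; exact Hz))). lra. }
  assert (Hend0 : forall k, (1 <= k <= n)%nat -> f (alpha a k) = d k * f 0 + c k * alpha a k + beta k).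
  { intros k Hk. rewrite (Hclosed k (alpha a k)) by (auto; rewrite AS by lia; pose proof (Ha k Hk); lra).
    rewrite Sinv0; reflexivity. }
  assert (Hend1 : forall k, (1 <= k <= n)%nat -> f (alpha a (S k)) = d k * f 1 + c k * alpha a (S k) + beta k).
  { intros k Hk. rewrite (Hclosed k (alpha a (S k))) by (auto; rewrite AS by lia; pose proof (Ha k Hk); lra).
    rewrite Sinv1; auto. }
  assert (Hloc : forall x, 0 <= x <= 1 -> exists i, (1 <= i <= n)%nat /\ alpha a i <= x <= alpha a (S i)).
  { intros x Hx.
    assert (forall m, (1 <= m <= n)%nat -> x <= alpha a (S m) ->
              exists i, (1 <= i <= m)%nat /\ alpha a i <= x <= alpha a (S i)).
    { induction m; intros Hm Hxm; [lia|].
      destruct (Nat.eq_dec m 0).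
      - subst. exists 1%nat. split; [lia|]. rewrite A1; lra.
      - destruct (Rle_dec x (alpha a (S m))).
        + destruct IHm as [i [Hi1 Hi2]]; [lia|auto|]. exists i; split; [lia|auto].
        + exists (S m); split; [lia| lra]. }
    apply H; [lia| rewrite Anp1; lra]. }
  set (rho := mx (fun k => Rabs (d k) / a k) n).
  set (cm := mx (fun k => Rabs (c k)) n).
  assert (Hrho : 0 <= rho < 1).
  { split; [apply mx_ge0|]. apply mx_lt; [lra|]. intros k Hk.
    pose proof (Ha k Hk). pose proof (Hda k Hk).
    apply (Rmult_lt_reg_r (a k)); [lra|]. unfold Rdiv; rewrite Rmult_assoc, Rinv_l, Rmult_1_r; lra. }
  assert (Hdk : forall k, (1 <= k <= n)%nat -> Rabs (d k) <= rho * a k).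
  { intros k Hk. pose proof (Ha k Hk).
    pose proof (mx_ub (fun k => Rabs (d k) / a k) n k Hk) as Hu. simpl in Hu. fold rho in Hu.
    replace (Rabs (d k)) with (Rabs (d k) / a k * a k) by (field; lra).
    apply Rmult_le_compat_r; lra. }
  assert (Hck : forall k, (1 <= k <= n)%nat -> Rabs (c k) <= cm).
  { intros k Hk. exact (mx_ub (fun k => Rabs (c k)) n k Hk). }
  assert (Hcm : 0 <= cm) by apply mx_ge0.
  assert (Hak1 : forall k, (1 <= k <= n)%nat -> a k <= 1).
  { intros k Hk. pose proof (AS k ltac:(lia)). pose proof (Arange k ltac:(lia)).
    pose proof (Arange (S k) ltac:(lia)). lra. }
  set (g := fun x => Rabs (f (Rmax 0 (Rmin 1 x)))).
  assert (Hclamp : forall x, 0 <= x <= 1 -> Rmax 0 (Rmin 1 x) = x).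
  { intros x Hx. rewrite Rmin_right by lra. rewrite Rmax_right by lra. reflexivity. }
  destruct (continuity_ab_maj g 0 1 ltac:(lra)) as [Mx [HMx HMx01]].
  { intros x Hx. unfold continuity_pt, continue_in, limit1_in, limit_in. simpl. unfold R_dist.
    intros eps Heps. destruct (Hcont x Hx eps Heps) as [dl [Hdl Hy]].
    exists dl; split; [lra|]. intros y [_ Hyx]. unfold g. rewrite (Hclamp x Hx).
    assert (Hz : 0 <= Rmax 0 (Rmin 1 y) <= 1 /\ Rabs (Rmax 0 (Rmin 1 y) - x) <= Rabs (y - x)).
    { unfold Rmax, Rmin. repeat destruct (Rle_dec _ _); split; try lra;
      unfold Rabs; repeat destruct Rcase_abs; lra. }
    destruct Hz as [Hz1 Hz2].
    eapply Rle_lt_trans; [apply Rabs_triang_inv2|]. apply Hy; [lra|lra]. }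
  set (B := g Mx).
  assert (Hb : forall x, 0 <= x <= 1 -> Rabs (f x) <= B).
  { intros x Hx. pose proof (HMx x Hx). unfold g in H. rewrite Hclamp in H by lra. exact H. }
  assert (HB0 : 0 <= B) by (pose proof (Hb 0 ltac:(lra)); pose proof (Rabs_pos (f 0)); lra).
  set (F01 := Rabs (f 0 - f 1)).
  assert (HF01 : 0 <= F01) by apply Rabs_pos.
  set (K := (F01 + cm) / (1 - rho)).
  assert (HKe : K * (1 - rho) = F01 + cm) by (unfold K; field; lra).
  assert (HK0 : 0 <= K).
  { unfold K. unfold Rdiv. apply Rmult_le_pos; [lra|left; apply Rinv_0_lt_compat; lra]. }
  assert (HK1 : rho * K + cm <= K) by nra.
  assert (HK2 : rho * F01 + cm <= K) by nra.
  assert (Hchain : forall r p, (1 <= p)%nat -> (p + r <= S n)%nat ->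
     Rabs (f (alpha a p) - f (alpha a (p + r))) <= K * (alpha a (p + r) - alpha a p)).
  { induction r; intros p Hp Hpr.
    - rewrite Nat.add_0_r. replace (f (alpha a p) - f (alpha a p)) with 0 by ring.
      rewrite Rabs_R0; lra.
    - rewrite Nat.add_succ_r in *. set (l := (p + r)%nat) in *.
      assert (Hl : (1 <= l <= n)%nat) by lia.
      pose proof (IHr p Hp ltac:(lia)) as IH. fold l in IH.
      assert (Hstep : Rabs (f (alpha a l) - f (alpha a (S l))) <= K * a l).
      { rewrite Hend0, Hend1, AS by lia.
        replace (d l * f 0 + c l * alpha a l + beta l - (d l * f 1 + c l * (alpha a l + a l) + beta l))
          with (d l * (f 0 - f 1) + - (c l * a l)) by ring.
        eapply Rle_trans; [apply Rabs_triang|].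
        rewrite Rabs_Ropp, !Rabs_mult, (Rabs_pos_eq (a l)) by (pose proof (Ha l Hl); lra).
        fold F01. pose proof (Ha l Hl). pose proof (Hdk l Hl). pose proof (Hck l Hl).
        assert (Rabs (d l) * F01 <= rho * a l * F01) by (apply Rmult_le_compat_r; lra).
        assert (Rabs (c l) * a l <= cm * a l) by (apply Rmult_le_compat_r; lra).
        assert (a l * (rho * F01 + cm) <= a l * K) by (apply Rmult_le_compat_l; lra).
        lra. }
      apply Rle_trans with (Rabs (f (alpha a p) - f (alpha a l)) + Rabs (f (alpha a l) - f (alpha a (S l)))).
      { replace (f (alpha a p) - f (alpha a (S l))) with
          ((f (alpha a p) - f (alpha a l)) + (f (alpha a l) - f (alpha a (S l)))) by ring.
        apply Rabs_triang. }
      replace (K * (alpha a (S l) - alpha a p)) with (K * (alpha a l - alpha a p) + K * a l) by (rewrite (AS l) by lia; ring). lra. }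
  assert (Hmain : forall m x y, 0 <= x <= 1 -> 0 <= y <= 1 -> x <= y ->
     Rabs (f x - f y) <= K * (y - x) + rho ^ m * (2 * B)).
  { induction m; intros x y Hx Hy Hxy.
    - simpl. apply Rle_trans with (Rabs (f x) + Rabs (f y)).
      { unfold Rminus; rewrite <- (Rabs_Ropp (f y)); apply Rabs_triang. }
      assert (0 <= K * (y - x)) by (apply Rmult_le_pos; lra).
      pose proof (Hb x Hx); pose proof (Hb y Hy); lra.
    - set (E := rho ^ m * (2 * B)).
      assert (HE : 0 <= E) by (unfold E; apply Rmult_le_pos; [apply pow_le|]; lra).
      replace (rho ^ S m * (2 * B)) with (rho * E) by (unfold E; simpl; ring).
      assert (Hsame : forall k u v, (1 <= k <= n)%nat -> alpha a k <= u -> u <= v -> v <= alpha a (S k) ->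
                Rabs (f u - f v) <= K * (v - u) + rho * a k * E).
      { intros k u v Hk Hu Huv Hv.
        pose proof (Ha k Hk) as Hak. pose proof (AS k ltac:(lia)) as ASk.
        pose proof (Arange k ltac:(lia)). pose proof (Arange (S k) ltac:(lia)).
        rewrite (Hclosed k u) by (auto; lra). rewrite (Hclosed k v) by (auto; lra).
        set (su := Sinv a k u). set (sv := Sinv a k v).
        assert (Hsu : a k * su = u - alpha a k) by (unfold su, Sinv; field; lra).
        assert (Hsv : a k * sv = v - alpha a k) by (unfold sv, Sinv; field; lra).
        assert (Hs : 0 <= su /\ su <= sv /\ sv <= 1) by nra.
        pose proof (IHm su sv ltac:(lra) ltac:(lra) ltac:(lra)) as IH. fold E in IH.
        replace (d k * f su + c k * u + beta k - (d k * f sv + c k * v + beta k))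
          with (d k * (f su - f sv) + c k * (u - v)) by ring.
        eapply Rle_trans; [apply Rabs_triang|]. rewrite !Rabs_mult.
        rewrite (Rabs_minus_sym u v), (Rabs_pos_eq (v - u)) by lra.
        pose proof (Hdk k Hk). pose proof (Hck k Hk). pose proof (Rabs_pos (d k)).
        pose proof (Rabs_pos (f su - f sv)).
        assert (Rabs (d k) * Rabs (f su - f sv) <= rho * a k * (K * (sv - su) + E))
          by (apply Rmult_le_compat; lra).
        assert (Rabs (c k) * (v - u) <= cm * (v - u)) by (apply Rmult_le_compat_r; lra).
        assert (rho * K * (a k * (sv - su)) = rho * K * (v - u)) by (rewrite Rmult_minus_distr_l, Hsu, Hsv; ring).
        assert ((rho * K + cm) * (v - u) <= K * (v - u)) by (apply Rmult_le_compat_r; lra).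
        nra. }
      destruct (Hloc x Hx) as [i [Hi Hxi]]. destruct (Hloc y Hy) as [j [Hj Hyj]].
      destruct (Nat.lt_ge_cases i j) as [Hij|Hij].
      + assert (Hij' : alpha a (S i) <= alpha a j) by (apply Amono; lia).
        pose proof (Hsame i x (alpha a (S i)) Hi ltac:(lra) ltac:(lra) ltac:(lra)) as L1.
        pose proof (Hsame j (alpha a j) y Hj ltac:(lra) ltac:(lra) ltac:(lra)) as L3.
        pose proof (Hchain (j - S i)%nat (S i) ltac:(lia) ltac:(lia)) as L2.
        replace (S i + (j - S i))%nat with j in L2 by lia.
        pose proof (AS i ltac:(lia)). pose proof (AS j ltac:(lia)).
        pose proof (Arange i ltac:(lia)). pose proof (Arange (S j) ltac:(lia)).
        assert (rho * E * (a i + a j) <= rho * E * 1) by (apply Rmult_le_compat_l; [apply Rmult_le_pos|]; lra).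
        apply Rle_trans with (Rabs (f x - f (alpha a (S i))) + Rabs (f (alpha a (S i)) - f (alpha a j))
                               + Rabs (f (alpha a j) - f y)).
        { replace (f x - f y) with ((f x - f (alpha a (S i))) + (f (alpha a (S i)) - f (alpha a j))
                               + (f (alpha a j) - f y)) by ring.
          eapply Rle_trans; [apply Rabs_triang|]. apply Rplus_le_compat_r. apply Rabs_triang. }
        lra.
      + assert (alpha a j <= alpha a i) by (apply Amono; lia).
        assert (Hy2 : y <= alpha a (S j)) by lra.
        pose proof (Hsame j x y Hj ltac:(lra) Hxy Hy2).
        pose proof (Ha j Hj). pose proof (Hak1 j Hj).
        assert (rho * a j * E <= rho * E) by (assert (rho * E * a j <= rho * E * 1) by (apply Rmult_le_compat_l; [apply Rmult_le_pos|]; lra); lra).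
        lra. }
  assert (Hlip : forall x y, 0 <= x <= 1 -> 0 <= y <= 1 -> Rabs (f x - f y) <= K * Rabs (x - y)).
  { intros x y Hx Hy. destruct (Rle_dec x y).
    - rewrite (Rabs_minus_sym x y), (Rabs_pos_eq (y - x)) by lra.
      apply (limit_geom _ _ rho (2 * B)); [lra|lra|]. intros m; apply Hmain; auto.
    - rewrite (Rabs_minus_sym (f x)), (Rabs_pos_eq (x - y)) by lra.
      apply (limit_geom _ _ rho (2 * B)); [lra|lra|]. intros m; apply Hmain; auto; lra. }
  split.
  - intros al Hal. exists K. intros x y Hx Hy Hxy.
    eapply Rle_trans; [apply Hlip; auto|]. apply Rmult_le_compat_l; [lra|].
    apply rpow_ge; [|lra]. split.
    + apply Rabs_pos_lt. intro Hz; apply Hxy; apply Rminus_diag_uniq; exact Hz.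
    + unfold Rabs; destruct Rcase_abs; lra.
  - exists K. split; auto.
Qed.
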